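(* Let $\alpha,\beta,c\in\mathbb{C}$, $\ell(x,y)=\alpha x+\beta y$, and let $C(x,y)$ be a quadratic polynomial. For the pencil $\mathfrak E$ consisting of the conics $$\mathcal E_\lambda:\quad C(x,y)-\lambda\big(c^2-\ell^2(x,y)\big)=0,$$ the involution $I_{\mathfrak E,B_\infty}$ with $B_\infty=[-\beta:\alpha:0]$ is an affine map of $\mathbb{C}^2$.
   Context: For a nonsingular conic $\mathcal E$ and a point $B\notin\mathcal E$ of $\mathbb{C}P^2$ (possibly at infinity), $I_{\mathcal E,B}:\mathcal E\to\mathcal E$ sends $P$ to the second intersection point of $\mathcal E$ with the line $(BP)$. For a pencil $\mathfrak E=\{\mathcal E_\lambda\}$ of conics, the $B$-switch $I_{\mathfrak E,B}:\mathbb{C}^2\dashrightarrow\mathbb{C}^2$ sends a non-base point $P$ to $I_{\mathcal E_\lambda,B}(P)$, where $\mathcal E_\lambda$ is the unique conic of the pencil through $P$. *)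

(* Defs.v *)
From mathcomp Require Import all_boot all_algebra.
From mathcomp Require Export reals complex.
Set Implicit Arguments. Unset Strict Implicit. Unset Printing Implicit Defensive.
Import GRing.Theory.
Local Open Scope ring_scope.

(* A conic of CP^2 given by its (homogenized) equation
   a x^2 + b x y + c y^2 + d x z + e y z + f z^2 = 0;
   in affine coordinates (z = 1) this is the quadratic polynomial
   a x^2 + b x y + c y^2 + d x + e y + f. *)
Record conic (K : fieldType) := Conic {
  ca : K; cb : K; cc : K; cd : K; ce : K; cf : K }.

Definition hom_eval (K : fieldType) (F : conic K) (x y z : K) : K :=
  ca F * x ^+ 2 + cb F * x * y + cc F * y ^+ 2
  + cd F * x * z + ce F * y * z + cf F * z ^+ 2.

Definition aff_eval (K : fieldType) (F : conic K) (x y : K) : K :=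
  hom_eval F x y 1.

Definition on_conic (K : fieldType) (F : conic K) (x y z : K) : Prop :=
  hom_eval F x y z = 0.

(* The pencil  E_lam :  C(x,y) - lam (c^2 - (al x + be y)^2) = 0. *)
Definition pencil (K : fieldType) (C : conic K) (al be c lam : K) : conic K :=
  Conic (ca C + lam * al ^+ 2) (cb C + lam * (2%:R * al * be))
        (cc C + lam * be ^+ 2) (cd C) (ce C) (cf C - lam * c ^+ 2).

(* I_{F,B}(P) = Q for the point at infinity B = [u : v : 0] and the affine
   point P = (x, y) of F:  the line (BP) is  {[x + s u : y + s v : 1]} u {B};
   F restricted to it is a quadratic in s with a root at s = 0 (the point P)
   and leading coefficient F(B) <> 0, and Q = P + s0 (u, v) where s0 is the
   other root (counted with multiplicity, so Q = P in the tangent case). *)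
Definition second_point_inf (K : fieldType) (F : conic K) (u v : K)
    (P Q : K * K) : Prop :=
  exists s0 : K,
    Q = (P.1 + s0 * u, P.2 + s0 * v) /\
    exists a2 : K, a2 != 0 /\
      forall s : K, aff_eval F (P.1 + s * u) (P.2 + s * v) = a2 * s * (s - s0).

(* Main.v *)
Require Import Defs.
From mathcomp Require Import all_boot all_algebra.
From mathcomp Require Import reals complex.
From mathcomp Require Import ring.
Import GRing.Theory.
Local Open Scope ring_scope.

Theorem corollary1 (R : realType) (al be c : R[i]) (C : conic R[i]) :
  (al, be) != (0, 0) ->
  (forall lam : R[i], ~ on_conic (pencil C al be c lam) (- be) al 0) ->
  exists (m11 m12 m21 m22 v1 v2 : R[i]),
    forall x y : R[i],
      c ^+ 2 - (al * x + be * y) ^+ 2 != 0 ->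
      forall lam : R[i],
        aff_eval (pencil C al be c lam) x y = 0 ->
        second_point_inf (pencil C al be c lam) (- be) al (x, y)
          (m11 * x + m12 * y + v1, m21 * x + m22 * y + v2).
Proof.
move=> _ HB.
set A2 := ca C * be ^+ 2 - cb C * be * al + cc C * al ^+ 2.
have A2nz : A2 != 0.
  apply/eqP => E; apply: (HB 0); rewrite /on_conic /hom_eval /=.
  apply: (etrans _ E); rewrite /A2; ring.
set K1 := - ((2%:R * ca C * (- be) + cb C * al) / A2).
set K2 := - ((cb C * (- be) + 2%:R * cc C * al) / A2).
set K3 := - ((cd C * (- be) + ce C * al) / A2).
exists (1 + K1 * (- be)), (K2 * (- be)), (K1 * al), (1 + K2 * al),
  (K3 * (- be)), (K3 * al).
move=> x y _ lam H.
exists (K1 * x + K2 * y + K3); split.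
  congr pair => /=; ring.
exists A2; split => // s.
have E : aff_eval (pencil C al be c lam) (x + s * - be) (y + s * al)
   - A2 * s * (s - (K1 * x + K2 * y + K3)) = aff_eval (pencil C al be c lam) x y.
  rewrite /aff_eval /hom_eval /K1 /K2 /K3 /A2 /=; field.
  exact: A2nz.
by apply/eqP; rewrite -subr_eq0; apply/eqP; rewrite E.
Qed.
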